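(* Let $c$ be a command and $\rho_1,\rho_2,\mu_1,\mu_2$ states with $\mathtt b\notin\mathrm{UsedVars}(c)$, $\rho_1(\mathtt b)=\rho_2(\mathtt b)=0$, $|a|_{\mu_1}>0$ and $|a|_{\mu_2}>0$ for every array $a$, and $\langle c,\rho_1,\mu_1\rangle\approx\langle c,\rho_2,\mu_2\rangle$. Then $\langle\mathrm{USLH}(c),\rho_1,\mu_1,\mathtt{false}\rangle\approx_s\langle\mathrm{USLH}(c),\rho_2,\mu_2,\mathtt{false}\rangle$.
   Context: Language AWhile: scalar variables $X\in\mathcal V$, array names $a\in\mathcal A$. Arithmetic expressions $e::=n\ (n\in\mathbb N)\mid X\mid \mathrm{op}_{\mathbb N}(e,\dots,e)\mid be\,?\,e_1:e_2$; boolean expressions $be::=\mathtt{true}\mid\mathtt{false}\mid\mathrm{cmp}(e,e)\mid\mathrm{op}_{\mathbb B}(be,\dots,be)$; commands $c::=\mathtt{skip}\mid X:=e\mid c_1;c_2\mid \mathtt{if}\ be\ \mathtt{then}\ c_1\ \mathtt{else}\ c_2\mid\mathtt{while}\ be\ \mathtt{do}\ c\mid X\leftarrow a[e]\mid a[e]\leftarrow e'$. A scalar state is $\rho:\mathcal V\to\mathbb N$; an array state $\mu$ gives each array $a$ a size $|a|_\mu$ and values $\mu(a)[i]$ for $0\le i<|a|_\mu$. $[\![\cdot]\!]_\rho$ is the usual pure evaluation. $\mathrm{UsedVars}(c)$ is the set of scalar variables occurring in $c$; $\mathtt b$ is a reserved scalar variable. Sequential semantics: steps $\langle c,\rho,\mu\rangle\xrightarrow{o}\langle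 c',\rho',\mu'\rangle$, $o$ an optional observation $\mathrm{branch}(v)$, $\mathrm{read}(a,i)$, $\mathrm{write}(a,i)$. $X:=e\to\mathtt{skip}$ with $\rho[X\mapsto[\![e]\!]_\rho]$, no obs; $c_1;c_2\xrightarrow{o}c_1';c_2$ if $c_1\xrightarrow{o}c_1'$; $\mathtt{skip};c\to c$; $\mathtt{if}\ be\ \mathtt{then}\ c_{\mathtt{true}}\ \mathtt{else}\ c_{\mathtt{false}}\to c_v$, $v=[\![be]\!]_\rho$, obs $\mathrm{branch}(v)$; $\mathtt{while}\ be\ \mathtt{do}\ c\to\mathtt{if}\ be\ \mathtt{then}\ (c;\mathtt{while}\ be\ \mathtt{do}\ c)\ \mathtt{else}\ \mathtt{skip}$; $X\leftarrow a[ie]\to\mathtt{skip}$ setting $X$ to $\mu(a)[i]$, obs $\mathrm{read}(a,i)$, if $i=[\![ie]\!]_\rho<|a|_\mu$; $a[ie]\leftarrow e\to\mathtt{skip}$ with $\mu[a[i]\mapsto[\![e]\!]_\rho]$, obs $\mathrm{write}(a,i)$, if $i<|a|_\mu$. $\xrightarrow{O}{}^*$ is the reflexive-transitive closure collecting observations. $\langle c_1,\rho_1,\mu_1\rangle\approx\langle c_2,\rho_2,\mu_2\rangle$ iff for all $O_1,O_2$ with $\langle c_k,\rho_k,\mu_k\rangle\xrightarrow{O_k}{}^*$ some configuration, one of $O_1,O_2$ is a prefix of the other. Speculative semantics: configurations $\langle c,\rho,\mu,\beta\rangle$ with boolean flag $\beta$; steps labelled by an optional observation and optional directive $d\in\{\mathit{step},\mathit{force},\mathrm{load}(a',j),\mathrm{store}(a',j)\}$.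 Non-observing rules as sequentially (flag kept, no directive). Conditional: with $\mathit{step}$ as sequentially; with $\mathit{force}$ go to branch $\neg[\![be]\!]_\rho$ and set $\beta:=\mathtt{true}$; both observe $\mathrm{branch}([\![be]\!]_\rho)$. Read/write with $\mathit{step}$ as sequentially. Read with $\mathrm{load}(a',j)$: requires $\beta=\mathtt{true}$, $i=[\![ie]\!]_\rho\ge|a|_\mu$, $j<|a'|_\mu$, sets $X$ to $\mu(a')[j]$, obs $\mathrm{read}(a,i)$. Write with $\mathrm{store}(a',j)$: requires $\beta=\mathtt{true}$, $i\ge|a|_\mu$, $j<|a'|_\mu$, sets $\mu[a'[j]\mapsto[\![e]\!]_\rho]$, obs $\mathrm{write}(a,i)$. $\langle c_1,\rho_1,\mu_1,\beta_1\rangle\approx_s\langle c_2,\rho_2,\mu_2,\beta_2\rangle$ iff for all $D,O_1,O_2$, if both configurations multi-step with the same directive list $D$ producing $O_1$ resp. $O_2$, then $O_1=O_2$. Ultimate SLH: $\mathrm{USLH}(\mathtt{skip})=\mathtt{skip}$; $\mathrm{USLH}(X:=e)=X:=e$; $\mathrm{USLH}(c_1;c_2)=\mathrm{USLH}(c_1);\mathrm{USLH}(c_2)$; with $B(be)=(\mathtt b==0\ \&\&\ be)$: $\mathrm{USLH}(\mathtt{if}\ be\ \mathtt{then}\ c_1\ \mathtt{else}\ c_2)=\mathtt{if}\ B(be)\ \mathtt{then}\ (\mathtt b:=B(be)\,?\,\mathtt b:1;\mathrm{USLH}(c_1))\ \mathtt{else}\ (\mathtt b:=B(be)\,?\,1:\mathtt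 b;\mathrm{USLH}(c_2))$; $\mathrm{USLH}(\mathtt{while}\ be\ \mathtt{do}\ c)=(\mathtt{while}\ B(be)\ \mathtt{do}\ (\mathtt b:=B(be)\,?\,\mathtt b:1;\mathrm{USLH}(c)));\ \mathtt b:=B(be)\,?\,1:\mathtt b$; $\mathrm{USLH}(X\leftarrow a[i])=X\leftarrow a[(\mathtt b==1)\,?\,0:i]$; $\mathrm{USLH}(a[i]\leftarrow e)=a[(\mathtt b==1)\,?\,0:i]\leftarrow e$. *)

(* Defs.v *)
From Stdlib Require Import String List Arith Bool.
Import ListNotations.
Local Open Scope list_scope.

Definition var := string.
Definition arr := string.

Inductive aexp : Type :=
  | ANum (n : nat)
  | AId (x : var)
  | AOp (f : list nat -> nat) (es : list aexp)
  | ACTIf (be : bexp) (e1 e2 : aexp)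
with bexp : Type :=
  | BTrue
  | BFalse
  | BCmp (f : nat -> nat -> bool) (e1 e2 : aexp)
  | BOp (f : list bool -> bool) (bs : list bexp).

Inductive com : Type :=
  | CSkip
  | CAsgn (x : var) (e : aexp)
  | CSeq (c1 c2 : com)
  | CIf (be : bexp) (c1 c2 : com)
  | CWhile (be : bexp) (c : com)
  | CARead (x : var) (a : arr) (i : aexp)
  | CAWrite (a : arr) (i : aexp) (e : aexp).

Definition sstate := var -> nat.
(* array state mu : each array a is a list; |a|_mu = length (mu a), values nth *)
Definition astate := arr -> list nat.

Definition supd (r : sstate) (x : var) (v : nat) : sstate :=
  fun y => if String.eqb x y then v else r y.

Fixpoint upd_nth (l : list nat) (i : nat) (v : nat) : list nat :=
  match l, i with
  | [], _ => []
  | _ :: t, 0 => v :: t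
  | h :: t, S i' => h :: upd_nth t i' v
  end.

Definition aupd (m : astate) (a : arr) (i : nat) (v : nat) : astate :=
  fun b => if String.eqb a b then upd_nth (m a) i v else m b.

Definition asize (m : astate) (a : arr) : nat := length (m a).
Definition aget (m : astate) (a : arr) (i : nat) : nat := nth i (m a) 0.

Fixpoint aeval (r : sstate) (e : aexp) : nat :=
  match e with
  | ANum n => n
  | AId x => r x
  | AOp f es => f (map (aeval r) es)
  | ACTIf be e1 e2 => if beval r be then aeval r e1 else aeval r e2
  end
with beval (r : sstate) (b : bexp) : bool :=
  match b with
  | BTrue => true
  | BFalse => false
  | BCmp f e1 e2 => f (aeval r e1) (aeval r e2)
  | BOp f bs => f (map (beval r) bs)
  end.

Fixpoint avars (e : aexp) : list var :=
  match e with
  | ANum _ => []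
  | AId x => [x]
  | AOp _ es => flat_map avars es
  | ACTIf be e1 e2 => bvars be ++ avars e1 ++ avars e2
  end
with bvars (b : bexp) : list var :=
  match b with
  | BTrue | BFalse => []
  | BCmp _ e1 e2 => avars e1 ++ avars e2
  | BOp _ bs => flat_map bvars bs
  end.

Fixpoint used_vars (c : com) : list var :=
  match c with
  | CSkip => []
  | CAsgn x e => x :: avars e
  | CSeq c1 c2 => used_vars c1 ++ used_vars c2
  | CIf be c1 c2 => bvars be ++ used_vars c1 ++ used_vars c2
  | CWhile be c => bvars be ++ used_vars c
  | CARead x _ i => x :: avars i
  | CAWrite _ i e => avars i ++ avars e
  end.

Inductive observation : Type :=
  | OBranch (v : bool)
  | ORead (a : arr) (i : nat)
  | OWrite (a : arr) (i : nat).

Definition obs_list (o : option observation) : list observation :=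
  match o with None => [] | Some x => [x] end.

Inductive seq_step : com -> sstate -> astate -> option observation ->
                     com -> sstate -> astate -> Prop :=
  | SS_Asgn : forall x e r m,
      seq_step (CAsgn x e) r m None CSkip (supd r x (aeval r e)) m
  | SS_Seq : forall c1 c2 c1' r m o r' m',
      seq_step c1 r m o c1' r' m' ->
      seq_step (CSeq c1 c2) r m o (CSeq c1' c2) r' m'
  | SS_Skip : forall c r m,
      seq_step (CSeq CSkip c) r m None c r m
  | SS_If : forall be c1 c2 r m,
      seq_step (CIf be c1 c2) r m (Some (OBranch (beval r be)))
               (if beval r be then c1 else c2) r m
  | SS_While : forall be c r m,
      seq_step (CWhile be c) r m None
               (CIf be (CSeq c (CWhile be c)) CSkip) r m
  | SS_ARead : forall x a ie r m i,
      i = aeval r ie -> i < asize m a ->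
      seq_step (CARead x a ie) r m (Some (ORead a i))
               CSkip (supd r x (aget m a i)) m
  | SS_AWrite : forall a ie e r m i,
      i = aeval r ie -> i < asize m a ->
      seq_step (CAWrite a ie e) r m (Some (OWrite a i))
               CSkip r (aupd m a i (aeval r e)).

Inductive seq_multi : com -> sstate -> astate -> list observation ->
                      com -> sstate -> astate -> Prop :=
  | SM_Refl : forall c r m, seq_multi c r m [] c r m
  | SM_Step : forall c r m o c' r' m' os c'' r'' m'',
      seq_step c r m o c' r' m' ->
      seq_multi c' r' m' os c'' r'' m'' ->
      seq_multi c r m (obs_list o ++ os) c'' r'' m''.

Definition prefix {A} (l1 l2 : list A) : Prop := exists l, l2 = l1 ++ l.

Definition seq_equiv (c1 : com) (r1 : sstate) (m1 : astate)
                     (c2 : com) (r2 : sstate) (m2 : astate) : Prop :=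
  forall O1 O2 c1' r1' m1' c2' r2' m2',
    seq_multi c1 r1 m1 O1 c1' r1' m1' ->
    seq_multi c2 r2 m2 O2 c2' r2' m2' ->
    prefix O1 O2 \/ prefix O2 O1.

Inductive directive : Type :=
  | DStep
  | DForce
  | DLoad (a : arr) (j : nat)
  | DStore (a : arr) (j : nat).

Definition dir_list (d : option directive) : list directive :=
  match d with None => [] | Some x => [x] end.

Inductive spec_step : com -> sstate -> astate -> bool ->
                      option directive -> option observation ->
                      com -> sstate -> astate -> bool -> Prop :=
  | SP_Asgn : forall x e r m bt,
      spec_step (CAsgn x e) r m bt None None CSkip (supd r x (aeval r e)) m bt
  | SP_Seq : forall c1 c2 c1' r m bt d o r' m' bt',
      spec_step c1 r m bt d o c1' r' m' bt' ->
      spec_step (CSeq c1 c2) r m bt d o (CSeq c1' c2) r' m' bt'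
  | SP_Skip : forall c r m bt,
      spec_step (CSeq CSkip c) r m bt None None c r m bt
  | SP_If : forall be c1 c2 r m bt,
      spec_step (CIf be c1 c2) r m bt (Some DStep) (Some (OBranch (beval r be)))
                (if beval r be then c1 else c2) r m bt
  | SP_If_F : forall be c1 c2 r m bt,
      spec_step (CIf be c1 c2) r m bt (Some DForce) (Some (OBranch (beval r be)))
                (if negb (beval r be) then c1 else c2) r m true
  | SP_While : forall be c r m bt,
      spec_step (CWhile be c) r m bt None None
                (CIf be (CSeq c (CWhile be c)) CSkip) r m bt
  | SP_ARead : forall x a ie r m bt i,
      i = aeval r ie -> i < asize m a ->
      spec_step (CARead x a ie) r m bt (Some DStep) (Some (ORead a i))
                CSkip (supd r x (aget m a i)) m bt
  | SP_ARead_U : forall x a ie r m a' j i,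
      i = aeval r ie -> asize m a <= i -> j < asize m a' ->
      spec_step (CARead x a ie) r m true (Some (DLoad a' j)) (Some (ORead a i))
                CSkip (supd r x (aget m a' j)) m true
  | SP_AWrite : forall a ie e r m bt i,
      i = aeval r ie -> i < asize m a ->
      spec_step (CAWrite a ie e) r m bt (Some DStep) (Some (OWrite a i))
                CSkip r (aupd m a i (aeval r e)) bt
  | SP_AWrite_U : forall a ie e r m a' j i,
      i = aeval r ie -> asize m a <= i -> j < asize m a' ->
      spec_step (CAWrite a ie e) r m true (Some (DStore a' j)) (Some (OWrite a i))
                CSkip r (aupd m a' j (aeval r e)) true.

Inductive spec_multi : com -> sstate -> astate -> bool ->
                       list directive -> list observation ->
                       com -> sstate -> astate -> bool -> Prop :=
  | SPM_Refl : forall c r m bt, spec_multi c r m bt [] [] c r m bt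
  | SPM_Step : forall c r m bt d o c' r' m' bt' ds os c'' r'' m'' bt'',
      spec_step c r m bt d o c' r' m' bt' ->
      spec_multi c' r' m' bt' ds os c'' r'' m'' bt'' ->
      spec_multi c r m bt (dir_list d ++ ds) (obs_list o ++ os) c'' r'' m'' bt''.

Definition spec_equiv (c1 : com) (r1 : sstate) (m1 : astate) (b1 : bool)
                      (c2 : com) (r2 : sstate) (m2 : astate) (b2 : bool) : Prop :=
  forall D O1 O2 c1' r1' m1' b1' c2' r2' m2' b2',
    spec_multi c1 r1 m1 b1 D O1 c1' r1' m1' b1' ->
    spec_multi c2 r2 m2 b2 D O2 c2' r2' m2' b2' ->
    O1 = O2.

Definition b_var : var := "b"%string.

Definition BAnd (b1 b2 : bexp) : bexp :=
  BOp (fun l => match l with [x; y] => andb x y | _ => false end) [b1; b2].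
Definition BEqN (e1 e2 : aexp) : bexp := BCmp Nat.eqb e1 e2.

Definition Bmask (be : bexp) : bexp := BAnd (BEqN (AId b_var) (ANum 0)) be.

Fixpoint uslh (c : com) : com :=
  match c with
  | CSkip => CSkip
  | CAsgn x e => CAsgn x e
  | CSeq c1 c2 => CSeq (uslh c1) (uslh c2)
  | CIf be c1 c2 =>
      CIf (Bmask be)
          (CSeq (CAsgn b_var (ACTIf (Bmask be) (AId b_var) (ANum 1))) (uslh c1))
          (CSeq (CAsgn b_var (ACTIf (Bmask be) (ANum 1) (AId b_var))) (uslh c2))
  | CWhile be c0 =>
      CSeq (CWhile (Bmask be)
                   (CSeq (CAsgn b_var (ACTIf (Bmask be) (AId b_var) (ANum 1))) (uslh c0)))
           (CAsgn b_var (ACTIf (Bmask be) (ANum 1) (AId b_var)))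
  | CARead x a i =>
      CARead x a (ACTIf (BEqN (AId b_var) (ANum 1)) (ANum 0) i)
  | CAWrite a i e =>
      CAWrite a (ACTIf (BEqN (AId b_var) (ANum 1)) (ANum 0) i) e
  end.

(* Main.v *)
Require Import Defs.
From Stdlib Require Import List.
From Stdlib Require Import String Bool Arith FunctionalExtensionality.
Import ListNotations.

Notation mi i := (ACTIf (BEqN (AId b_var) (ANum 1)) (ANum 0) i).
Notation E1 be := (ACTIf (Bmask be) (AId b_var) (ANum 1)).
Notation E2 be := (ACTIf (Bmask be) (ANum 1) (AId b_var)).
Notation BODY be c := (CSeq (CAsgn b_var (E1 be)) (uslh c)).
Notation WW be c := (CWhile (Bmask be) (BODY be c)).
Notation AA be := (CAsgn b_var (E2 be)).
Definition NB c := ~ In b_var (used_vars c).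

Lemma Bmask_eval r be : beval r (Bmask be) = andb (Nat.eqb (r b_var) 0) (beval r be).
Proof. reflexivity. Qed.
Lemma mi_eval r i : aeval r (mi i) = if Nat.eqb (r b_var) 1 then 0 else aeval r i.
Proof. reflexivity. Qed.
Lemma E1_eval r be : aeval r (E1 be) = if beval r (Bmask be) then r b_var else 1.
Proof. reflexivity. Qed.
Lemma E2_eval r be : aeval r (E2 be) = if beval r (Bmask be) then 1 else r b_var.
Proof. reflexivity. Qed.
Lemma Bmask0 r be : r b_var = 0 -> beval r (Bmask be) = beval r be.
Proof. intros H. rewrite Bmask_eval, H. reflexivity. Qed.
Lemma Bmask1 r be : r b_var = 1 -> beval r (Bmask be) = false.
Proof. intros H. rewrite Bmask_eval, H. reflexivity. Qed.
Lemma mi0 r i : r b_var = 0 -> aeval r (mi i) = aeval r i.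
Proof. intros H. rewrite mi_eval, H. reflexivity. Qed.
Lemma mi1 r i : r b_var = 1 -> aeval r (mi i) = 0.
Proof. intros H. rewrite mi_eval, H. reflexivity. Qed.

Lemma supd_other r x v : x <> b_var -> supd r x v b_var = r b_var.
Proof. intros H. unfold supd. destruct (String.eqb_spec x b_var); congruence. Qed.
Lemma supd_b r v : supd r b_var v b_var = v.
Proof. unfold supd. rewrite String.eqb_refl. reflexivity. Qed.
Lemma supd_same r : supd r b_var (r b_var) = r.
Proof. apply functional_extensionality. intro y. unfold supd.
  destruct (String.eqb_spec b_var y); subst; reflexivity. Qed.

Inductive WF : com -> Prop :=
| WF_skip : WF CSkip
| WF_asgn x e : x <> b_var -> WF (CAsgn x e)
| WF_asgn1 be : WF (CAsgn b_var (E1 be))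
| WF_asgn2 be : WF (CAsgn b_var (E2 be))
| WF_seq c1 c2 : WF c1 -> WF c2 -> WF (CSeq c1 c2)
| WF_if be c1 c2 : WF c1 -> WF c2 -> WF (CIf (Bmask be) c1 c2)
| WF_while be c : WF c -> WF (CWhile (Bmask be) c)
| WF_read x a i : x <> b_var -> WF (CARead x a (mi i))
| WF_write a i e : WF (CAWrite a (mi i) e).

Ltac nbt H := let Hz := fresh in intro Hz; apply H; simpl; rewrite ?in_app_iff; subst; simpl; intuition auto.

Lemma NB_WF c : NB c -> WF (uslh c).
Proof.
  unfold NB; induction c; simpl; intros H.
  - constructor.
  - constructor. nbt H.
  - constructor; [apply IHc1 | apply IHc2]; nbt H.
  - apply WF_if; apply WF_seq; try apply WF_asgn1; try apply WF_asgn2;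
      [apply IHc1 | apply IHc2]; nbt H.
  - apply WF_seq; [apply WF_while; apply WF_seq; [apply WF_asgn1| apply IHc; nbt H] | apply WF_asgn2].
  - apply WF_read. nbt H.
  - apply WF_write.
Qed.

Inductive Pend (r : sstate) : com -> Prop :=
| P_asgn e : aeval r e = 1 -> Pend r (CAsgn b_var e)
| P_seq c1 c2 : Pend r c1 -> Pend r (CSeq c1 c2)
| P_skip c2 : Pend r c2 -> Pend r (CSeq CSkip c2).

Inductive R (r : sstate) : com -> com -> Prop :=
| R_skip0 : R r CSkip CSkip
| R_asgn0 x e : x <> b_var -> R r (CAsgn x e) (CAsgn x e)
| R_seq c1' c1 c2 : R r c1' c1 -> NB c2 -> R r (CSeq c1' (uslh c2)) (CSeq c1 c2)
| R_if be c1 c2 : NB c1 -> NB c2 ->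
    R r (CIf (Bmask be) (CSeq (CAsgn b_var (E1 be)) (uslh c1))
                        (CSeq (CAsgn b_var (E2 be)) (uslh c2))) (CIf be c1 c2)
| R_while be c : NB c -> R r (CSeq (WW be c) (AA be)) (CWhile be c)
| R_wif be c : NB c ->
    R r (CSeq (CIf (Bmask be) (CSeq (BODY be c) (WW be c)) CSkip) (AA be))
        (CIf be (CSeq c (CWhile be c)) CSkip)
| R_wbody be c c'' c' : NB c -> R r c'' c' ->
    R r (CSeq (CSeq c'' (WW be c)) (AA be)) (CSeq c' (CWhile be c))
| R_read x a i : x <> b_var -> R r (CARead x a (mi i)) (CARead x a i)
| R_write a i e : R r (CAWrite a (mi i) e) (CAWrite a i e)
| R_pend e c' cs : aeval r e = 0 -> WF (CAsgn b_var e) -> R r c' cs ->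
    R r (CSeq (CAsgn b_var e) c') cs
| R_skipS c' cs : R r c' cs -> R r (CSeq CSkip c') cs
| R_asgnb e : aeval r e = 0 -> WF (CAsgn b_var e) -> R r (CAsgn b_var e) CSkip.

Lemma R_base_gen r c : NB c -> R r (uslh c) c.
Proof.
  unfold NB; induction c; simpl; intros H.
  - constructor.
  - constructor. nbt H.
  - apply R_seq; [apply IHc1; nbt H | unfold NB; nbt H].
  - apply R_if; unfold NB; nbt H.
  - apply R_while; unfold NB; nbt H.
  - apply R_read; nbt H.
  - apply R_write.
Qed.

Lemma R_WF r c cs : R r c cs -> WF c.
Proof.
  induction 1.
  - constructor.
  - constructor; auto.
  - constructor; auto. apply NB_WF; auto.
  - apply WF_if; apply WF_seq; try apply WF_asgn1; try apply WF_asgn2; apply NB_WF; auto.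
  - apply WF_seq; [apply WF_while; apply WF_seq; [apply WF_asgn1| apply NB_WF; auto] | apply WF_asgn2].
  - apply WF_seq; [| apply WF_asgn2]. apply WF_if; [|constructor].
    apply WF_seq; [apply WF_seq; [apply WF_asgn1| apply NB_WF; auto]|].
    apply WF_while; apply WF_seq; [apply WF_asgn1| apply NB_WF; auto].
  - apply WF_seq; [| apply WF_asgn2]. apply WF_seq; auto.
    apply WF_while; apply WF_seq; [apply WF_asgn1| apply NB_WF; auto].
  - apply WF_read; auto.
  - apply WF_write.
  - constructor; auto.
  - constructor; auto. constructor.
  - auto.
Qed.

Lemma R_skip_inv r cs : R r CSkip cs -> cs = CSkip.
Proof. intros H; inversion H; reflexivity. Qed.

Ltac skipstep := match goal with H : spec_step CSkip _ _ _ _ _ _ _ _ _ |- _ => inversion H end.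

Lemma WF_step c r m bt d o c' r' m' bt' :
  WF c -> spec_step c r m bt d o c' r' m' bt' -> WF c'.
Proof.
  intros HW Hs; revert HW; induction Hs; intros HW; inversion HW; subst; try constructor; auto.
  - match goal with |- WF (if ?b then _ else _) => destruct b end; auto.
  - match goal with |- WF (if ?b then _ else _) => destruct b end; auto.
  - apply WF_seq; [|apply WF_while]; auto.
  - constructor.
Qed.

Lemma bt_mono c r m bt d o c' r' m' bt' :
  spec_step c r m bt d o c' r' m' bt' -> bt = true -> bt' = true.
Proof. induction 1; auto. Qed.

Lemma b1_pres c r m bt d o c' r' m' bt' :
  WF c -> r b_var = 1 -> spec_step c r m bt d o c' r' m' bt' -> r' b_var = 1.
Proof.
  intros HW Hb Hs; revert HW Hb; induction Hs; intros HW Hb; inversion HW; subst; auto;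
    try (rewrite supd_other by assumption; auto).
  - rewrite supd_b, E1_eval, Bmask1; auto.
  - rewrite supd_b, E2_eval, Bmask1; auto.
Qed.

Lemma Pend_step r c : Pend r c -> forall m bt d o c' r' m' bt',
  spec_step c r m bt d o c' r' m' bt' ->
  d = None /\ o = None /\ bt' = bt /\ (Pend r' c' \/ r' b_var = 1).
Proof.
  induction 1; intros m bt d o c' r' m' bt' Hs; inversion Hs; subst; try skipstep;
    try (repeat split; auto; fail).
  - match goal with H : spec_step c1 _ _ _ _ _ _ _ _ _ |- _ =>
      destruct (IHPend _ _ _ _ _ _ _ _ H) as [? [? [? [?|?]]]] end; repeat split; auto.
    left; constructor; auto.
  - match goal with H : Pend _ CSkip |- _ => inversion H end.
Qed.

Lemma ms_obs c r1 m1 b1 d o1 c1 r1' m1' b1' r2 m2 b2 o2 c2 r2' m2' b2' :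
  WF c -> r1 b_var = 1 -> r2 b_var = 1 ->
  spec_step c r1 m1 b1 d o1 c1 r1' m1' b1' ->
  spec_step c r2 m2 b2 d o2 c2 r2' m2' b2' -> o1 = o2.
Proof.
  intros HW H1 H2 Hs1; revert o2 c2 r2' m2' b2' HW; induction Hs1;
    intros o2 c2' r2' m2' b2' HW Hs2; inversion Hs2; subst; auto; try skipstep;
    inversion HW; subst.
  - eapply IHHs1; eauto.
  - rewrite !Bmask1; auto.
  - rewrite !Bmask1; auto.
  - rewrite !mi1; auto.
  - rewrite !mi1; auto.
  - rewrite !mi1; auto.
  - rewrite !mi1; auto.
Qed.

Lemma dO c r m bt d o c' r' m' bt' :
  spec_step c r m bt d o c' r' m' bt' -> (d = None <-> o = None).
Proof. induction 1; try tauto; split; intros; discriminate. Qed.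

Lemma dkind c r1 m1 b1 d1 o1 c1 r1' m1' b1' r2 m2 b2 d2 o2 c2 r2' m2' b2' :
  spec_step c r1 m1 b1 d1 o1 c1 r1' m1' b1' ->
  spec_step c r2 m2 b2 d2 o2 c2 r2' m2' b2' -> (d1 = None <-> d2 = None).
Proof.
  intros Hs1; revert d2 o2 c2 r2' m2' b2'; induction Hs1;
    intros d2 o2 c2' r2' m2' b2' Hs2; inversion Hs2; subst; try tauto; try skipstep;
    try (split; intros; discriminate).
  eauto.
Qed.

Lemma sdet c r1 m1 b1 d o c1 r1' m1' b1' r2 m2 b2 c2 r2' m2' b2' :
  spec_step c r1 m1 b1 d o c1 r1' m1' b1' ->
  spec_step c r2 m2 b2 d o c2 r2' m2' b2' -> c1 = c2.
Proof.
  intros Hs1; revert c2 r2' m2' b2'; induction Hs1;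
    intros c2' r2' m2' b2' Hs2; inversion Hs2; subst; auto; try skipstep.
  all: try (f_equal; eauto; fail).
  all: match goal with H : beval _ _ = beval _ _ |- _ => rewrite H end; reflexivity.
Qed.

Lemma multi_len c r m bt D O c' r' m' bt' :
  spec_multi c r m bt D O c' r' m' bt' -> List.length D = List.length O.
Proof.
  induction 1; auto. rewrite !length_app, IHspec_multi. f_equal.
  apply dO in H. destruct d, o; simpl; auto; exfalso; intuition discriminate.
Qed.

Lemma seq_one c r m o c' r' m' :
  seq_step c r m o c' r' m' -> seq_multi c r m (obs_list o) c' r' m'.
Proof. intros H. replace (obs_list o) with (obs_list o ++ []) by apply app_nil_r. econstructor; eauto. constructor. Qed.

Lemma seq_app c r m O1 c' r' m' O2 c'' r'' m'' :
  seq_multi c r m O1 c' r' m' -> seq_multi c' r' m' O2 c'' r'' m'' ->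
  seq_multi c r m (O1 ++ O2) c'' r'' m''.
Proof. induction 1; intros; simpl; auto. rewrite <- app_assoc. econstructor; eauto. Qed.

Lemma seq_lift c1 c2 r m O c1' r' m' :
  seq_multi c1 r m O c1' r' m' -> seq_multi (CSeq c1 c2) r m O (CSeq c1' c2) r' m'.
Proof. induction 1. constructor. econstructor; eauto. constructor; auto. Qed.

Lemma seq_equiv_pres c1 r1 m1 c2 r2 m2 O c1' r1' m1' c2' r2' m2' :
  seq_equiv c1 r1 m1 c2 r2 m2 -> seq_multi c1 r1 m1 O c1' r1' m1' ->
  seq_multi c2 r2 m2 O c2' r2' m2' -> seq_equiv c1' r1' m1' c2' r2' m2'.
Proof.
  intros HE H1 H2 O1 O2 a1 b1 d1 a2 b2 d2 M1 M2.
  destruct (HE _ _ _ _ _ _ _ _ (seq_app _ _ _ _ _ _ _ _ _ _ _ H1 M1)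
               (seq_app _ _ _ _ _ _ _ _ _ _ _ H2 M2)) as [[l Hl]|[l Hl]].
  - left; exists l. rewrite <- app_assoc in Hl. apply app_inv_head in Hl. auto.
  - right; exists l. rewrite <- app_assoc in Hl. apply app_inv_head in Hl. auto.
Qed.

Lemma seq_obs_eq c1 r1 m1 c2 r2 m2 o1 o2 c1' r1' m1' c2' r2' m2' :
  seq_equiv c1 r1 m1 c2 r2 m2 -> seq_multi c1 r1 m1 (obs_list o1) c1' r1' m1' ->
  seq_multi c2 r2 m2 (obs_list o2) c2' r2' m2' -> (o1 = None <-> o2 = None) -> o1 = o2.
Proof.
  intros HE H1 H2 Hi. destruct o1 as [x|], o2 as [y|].
  - destruct (HE _ _ _ _ _ _ _ _ H1 H2) as [[l Hl]|[l Hl]]; simpl in Hl;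
      injection Hl; intros; subst; auto.
  - exfalso. assert (Some x = None) by tauto. discriminate.
  - exfalso. assert (Some y = None) by tauto. discriminate.
  - auto.
Qed.

Lemma sim r c' cs : R r c' cs -> forall m d o c'' r' m' bt',
  r b_var = 0 -> spec_step c' r m false d o c'' r' m' bt' -> d <> Some DForce ->
  bt' = false /\ r' b_var = 0 /\
  exists cs', seq_multi cs r m (obs_list o) cs' r' m' /\ R r' c'' cs'.
Proof.
  induction 1; intros m d o cc r' m' bt' Hb Hs Hd; inversion Hs; subst;
    try (exfalso; apply Hd; reflexivity).
  -
    repeat split; auto. rewrite supd_other; auto.
    exists CSkip; split; [apply seq_one; constructor | constructor].
  -
    match goal with H : spec_step c1' _ _ _ _ _ _ _ _ _ |- _ =>
      destruct (IHR _ _ _ _ _ _ _ Hb H Hd) as [? [? [cs' [Hm HR']]]] end.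
    repeat split; auto. exists (CSeq cs' c2); split; [apply seq_lift; auto | apply R_seq; auto].
  -
    apply R_skip_inv in H; subst. repeat split; auto.
    exists c2; split; [apply seq_one; constructor | apply R_base_gen; auto].
  -
    repeat split; auto. rewrite Bmask0 by auto.
    pose proof (SS_If be c1 c2 r' m') as HS.
    destruct (beval r' be) eqn:E.
    + exists c1; split; [apply seq_one; auto|].
      apply R_pend; [rewrite E1_eval, Bmask0, E; auto | apply WF_asgn1 | apply R_base_gen; auto].
    + exists c2; split; [apply seq_one; auto|].
      apply R_pend; [rewrite E2_eval, Bmask0, E; auto | apply WF_asgn2 | apply R_base_gen; auto].
  -
    match goal with H : spec_step (CWhile _ _) _ _ _ _ _ _ _ _ _ |- _ => inversion H; subst end.
    repeat split; auto.
    exists (CIf be (CSeq c (CWhile be c)) CSkip); split; [apply seq_one; constructor | apply R_wif; auto].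
  -
    match goal with H : spec_step (CIf _ _ _) _ _ _ _ _ _ _ _ _ |- _ => inversion H; subst end;
      try (exfalso; apply Hd; reflexivity).
    repeat split; auto. rewrite Bmask0 by auto.
    pose proof (SS_If be (CSeq c (CWhile be c)) CSkip r' m') as HS.
    destruct (beval r' be) eqn:E.
    + exists (CSeq c (CWhile be c)); split; [apply seq_one; auto|].
      apply R_wbody; auto.
      apply R_pend; [rewrite E1_eval, Bmask0, E; auto | apply WF_asgn1 | apply R_base_gen; auto].
    + exists CSkip; split; [apply seq_one; auto|].
      apply R_skipS. apply R_asgnb; [rewrite E2_eval, Bmask0, E; auto | apply WF_asgn2].
  -
    match goal with H : spec_step (CSeq _ _) _ _ _ _ _ _ _ _ _ |- _ => inversion H; subst end.
    + match goal with H : spec_step c'' _ _ _ _ _ _ _ _ _ |- _ =>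
        destruct (IHR _ _ _ _ _ _ _ Hb H Hd) as [? [? [cs' [Hm HR']]]] end.
      repeat split; auto. exists (CSeq cs' (CWhile be c)); split;
        [apply seq_lift; auto | apply R_wbody; auto].
    + apply R_skip_inv in H0; subst. repeat split; auto.
      exists (CWhile be c); split; [apply seq_one; constructor | apply R_while; auto].
  -
    repeat split; auto. rewrite supd_other; auto.
    exists CSkip; split; [|constructor].
    rewrite mi0 by auto. apply seq_one. constructor; auto. rewrite <- mi0; auto.
  -
    repeat split; auto.
    exists CSkip; split; [|constructor].
    rewrite mi0 by auto. apply seq_one. constructor; auto. rewrite <- mi0; auto.
  -
    match goal with H : spec_step (CAsgn _ _) _ _ _ _ _ _ _ _ _ |- _ => inversion H; subst end.
    rewrite H, <- Hb, supd_same. repeat split; auto.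
    exists cs; split; [constructor | apply R_skipS; auto].
  - skipstep.
  - repeat split; auto. exists cs; split; [constructor | auto].
  - rewrite H, <- Hb, supd_same. repeat split; auto.
    exists CSkip; split; constructor.
Qed.

Lemma force r c' cs : R r c' cs -> forall m o cc r' m' bt',
  r b_var = 0 -> spec_step c' r m false (Some DForce) o cc r' m' bt' ->
  bt' = true /\ r' = r /\ m' = m /\ Pend r cc /\
  exists cs', seq_multi cs r m (obs_list o) cs' r m.
Proof.
  induction 1; intros m o cc r' m' bt' Hb Hs; inversion Hs; subst;
    try (match goal with H : spec_step (CWhile _ _) _ _ _ _ _ _ _ _ _ |- _ => inversion H end);
    try (match goal with H : spec_step (CAsgn _ _) _ _ _ _ _ _ _ _ _ |- _ => inversion H end);
    try skipstep.
  - match goal with H : spec_step c1' _ _ _ _ _ _ _ _ _ |- _ =>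
      destruct (IHR _ _ _ _ _ _ Hb H) as [? [? [? [HP [cs' Hm]]]]] end; subst.
    repeat split; auto. apply P_seq; auto. exists (CSeq cs' c2); apply seq_lift; auto.
  - repeat split; auto. rewrite Bmask0 by auto.
    destruct (beval r' be) eqn:E; simpl.
    + apply P_seq, P_asgn. rewrite E2_eval, Bmask0, E; auto.
    + apply P_seq, P_asgn. rewrite E1_eval, Bmask0, E; auto.
    + exists (if beval r' be then c1 else c2). apply seq_one. rewrite Bmask0 by auto. constructor.
  - match goal with H : spec_step (CIf _ _ _) _ _ _ _ _ _ _ _ _ |- _ => inversion H; subst end.
    repeat split; auto. rewrite Bmask0 by auto.
    destruct (beval r' be) eqn:E; simpl.
    + apply P_skip, P_asgn. rewrite E2_eval, Bmask0, E; auto.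
    + apply P_seq, P_seq, P_seq, P_asgn. rewrite E1_eval, Bmask0, E; auto.
    + exists (if beval r' be then CSeq c (CWhile be c) else CSkip). apply seq_one.
      rewrite Bmask0 by auto. constructor.
  - match goal with H : spec_step (CSeq _ _) _ _ _ _ _ _ _ _ _ |- _ => inversion H; subst end.
    match goal with H : spec_step _ _ _ _ (Some DForce) _ _ _ _ _ |- _ =>
      destruct (IHR _ _ _ _ _ _ Hb H) as [? [? [? [HP [cs' Hm]]]]] end; subst.
    repeat split; auto. apply P_seq, P_seq; auto.
    exists (CSeq cs' (CWhile be c)); apply seq_lift; auto.
Qed.

Definition Inv c r1 m1 b1 r2 m2 b2 : Prop :=
  (b1 = false /\ b2 = false /\ r1 b_var = 0 /\ r2 b_var = 0 /\
   exists cs1 cs2, R r1 c cs1 /\ R r2 c cs2 /\ seq_equiv cs1 r1 m1 cs2 r2 m2)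
  \/ (b1 = true /\ b2 = true /\ WF c /\ (r1 b_var = 1 \/ Pend r1 c) /\ (r2 b_var = 1 \/ Pend r2 c)).

Lemma step_pres c r1 m1 b1 r2 m2 b2 d o1 c1 r1' m1' b1' o2 c2 r2' m2' b2' :
  Inv c r1 m1 b1 r2 m2 b2 ->
  spec_step c r1 m1 b1 d o1 c1 r1' m1' b1' ->
  spec_step c r2 m2 b2 d o2 c2 r2' m2' b2' ->
  o1 = o2 /\ c1 = c2 /\ Inv c1 r1' m1' b1' r2' m2' b2'.
Proof.
  intros [[? [? [Hb1 [Hb2 [cs1 [cs2 [HR1 [HR2 HE]]]]]]]] | [? [? [HW [H1 H2]]]]] S1 S2; subst.
  - assert (Hio : o1 = None <-> o2 = None) by (pose proof (dO _ _ _ _ _ _ _ _ _ _ S1);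
      pose proof (dO _ _ _ _ _ _ _ _ _ _ S2); tauto).
    assert (Hd : d = Some DForce \/ d <> Some DForce)
      by (destruct d as [[| | |]|]; [right|left|right|right|right]; congruence).
    destruct Hd as [Hd|Hd].
    + subst d.
      destruct (force _ _ _ HR1 _ _ _ _ _ _ Hb1 S1) as [? [? [? [HP1 [cs1' Hm1]]]]].
      destruct (force _ _ _ HR2 _ _ _ _ _ _ Hb2 S2) as [? [? [? [HP2 [cs2' Hm2]]]]].
      subst.
      assert (o1 = o2) by (eapply seq_obs_eq; eauto). subst o2.
      assert (c1 = c2) by (eapply sdet; eauto). subst c2.
      repeat split; auto. right. repeat split; auto.
      eapply WF_step; [eapply R_WF; eauto | eauto].
    + destruct (sim _ _ _ HR1 _ _ _ _ _ _ _ Hb1 S1 Hd) as [? [? [cs1' [Hm1 HR1']]]].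
      destruct (sim _ _ _ HR2 _ _ _ _ _ _ _ Hb2 S2 Hd) as [? [? [cs2' [Hm2 HR2']]]].
      subst.
      assert (o1 = o2) by (eapply seq_obs_eq; eauto). subst o2.
      assert (c1 = c2) by (eapply sdet; eauto). subst c2.
      repeat split; auto. left. repeat split; auto. exists cs1', cs2'. repeat split; auto.
      eapply seq_equiv_pres; eauto.

  - assert (b1' = true) by (eapply bt_mono; eauto).
    assert (b2' = true) by (eapply bt_mono; eauto).
    subst.
    assert (Ho : o1 = o2).
    { destruct H1 as [Hb1 | HP1]; [destruct H2 as [Hb2 | HP2] |].
      - eapply ms_obs; [exact HW | exact Hb1 | exact Hb2 | exact S1 | exact S2].
      - destruct (Pend_step _ _ HP2 _ _ _ _ _ _ _ _ S2) as [? [? _]]. subst.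
        apply (dO _ _ _ _ _ _ _ _ _ _ S1); auto.
      - destruct (Pend_step _ _ HP1 _ _ _ _ _ _ _ _ S1) as [? [? _]]. subst.
        symmetry. apply (dO _ _ _ _ _ _ _ _ _ _ S2); auto. }
    subst o2.
    assert (c1 = c2) by (eapply sdet; eauto). subst c2.
    repeat split; auto. right. repeat split; auto.
    + eapply WF_step; eauto.
    + destruct H1 as [Hb1 | HP1].
      * left. eapply b1_pres; eauto.
      * destruct (Pend_step _ _ HP1 _ _ _ _ _ _ _ _ S1) as [? [? [? [?|?]]]]; auto.
    + destruct H2 as [Hb2 | HP2].
      * left. eapply b1_pres; eauto.
      * destruct (Pend_step _ _ HP2 _ _ _ _ _ _ _ _ S2) as [? [? [? [?|?]]]]; auto.
Qed.

Lemma main c r1 m1 b1 D O1 c1 r1' m1' b1' :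
  spec_multi c r1 m1 b1 D O1 c1 r1' m1' b1' ->
  forall r2 m2 b2 O2 c2 r2' m2' b2',
  spec_multi c r2 m2 b2 D O2 c2 r2' m2' b2' ->
  Inv c r1 m1 b1 r2 m2 b2 -> O1 = O2.
Proof.
  induction 1; intros r2 m2 b2 O2 c2 r2' m2' b2' H2 HI.
  - apply multi_len in H2. simpl in H2. destruct O2; [reflexivity | discriminate].
  - inversion H2; subst.
    + destruct d; simpl in *; [discriminate|].
      assert (o = None) by (apply (dO _ _ _ _ _ _ _ _ _ _ H); auto). subst.
      apply multi_len in H0. simpl in *. subst. destruct os; [reflexivity|discriminate].
    + rename H3 into S2.
      assert (d = d0).
      { assert (Hk : d = None <-> d0 = None) by (eapply dkind; [exact H | exact S2]).
        destruct d, d0; simpl in *; auto.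
        - injection H1; intros; subst; auto.
        - exfalso. assert (Some d = None) by tauto. discriminate.
        - exfalso. assert (Some d = None) by tauto. discriminate. }
      subst d0.
      assert (ds = ds0) by (eapply app_inv_head; eauto). subst ds0.
      destruct (step_pres _ _ _ _ _ _ _ _ _ _ _ _ _ _ _ _ _ _ HI H S2) as [? [? HI']].
      subst. f_equal. eapply IHspec_multi; eauto.
Qed.

Theorem theorem3p2 (c : com) (r1 r2 : sstate) (m1 m2 : astate) :
  ~ In b_var (used_vars c) ->
  r1 b_var = 0 -> r2 b_var = 0 ->
  (forall a, 0 < asize m1 a) -> (forall a, 0 < asize m2 a) ->
  seq_equiv c r1 m1 c r2 m2 ->
  spec_equiv (uslh c) r1 m1 false (uslh c) r2 m2 false.
Proof.
  intros HNB Hb1 Hb2 _ _ HE. unfold spec_equiv. intros.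
  eapply main; eauto. left. repeat split; auto.
  exists c, c. repeat split; auto; apply R_base_gen; auto.
Qed.
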